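(* Let $c,\ell,N\in\mathbb{N}_+$ and let the maximum pooling layer map $w^{i-1}=(w^{i-1}_1,\dots,w^{i-1}_{\ell N})$, $w^{i-1}_m\in\mathbb{R}^c$, to $w^i=(w^i_1,\dots,w^i_N)$ with $w^i_k=\max_{j=1,\dots,\ell}w^{i-1}_{\ell(k-1)+j}$, the maximum taken entrywise (channel-wise). Let $\Sigma\in\mathbb{R}^{c\times c}$ be diagonal and positive definite. Then for all inputs $w^{i-1}_a,w^{i-1}_b$ and every $k=1,\dots,N$, $$-(w^i_{a,k}-w^i_{b,k})^\top\Sigma(w^i_{a,k}-w^i_{b,k})+\sum_{j=1}^{\ell}\big(w^{i-1}_{a,\ell(k-1)+j}-w^{i-1}_{b,\ell(k-1)+j}\big)^\top\Sigma\big(w^{i-1}_{a,\ell(k-1)+j}-w^{i-1}_{b,\ell(k-1)+j}\big)\ge 0.$$ Consequently, with $\underline{w}$ denoting the column-wise stacked vector, the layer satisfies $$\begin{bmatrix}\underline{w}_a^i-\underline{w}_b^i\\ \underline{w}_a^{i-1}-\underline{w}_b^{i-1}\end{bmatrix}^\top\begin{bmatrix}Q & 0\\ 0 & R\end{bmatrix}\begin{bmatrix}\underline{w}_a^i-\underline{w}_b^i\\ \underline{w}_a^{i-1}-\underline{w}_b^{i-1}\end{bmatrix}\ge0$$ for all inputs, with $Q=-\mathrm{blkdiag}(\Sigma,\dots,\Sigma)$ ($N$ blocks) and $R=\mathrm{blkdiag}(\Sigma,\dots,\Sigma)$ ($\ell N$ blocks).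
   Context: For a sequence $w=(w_1,\dots,w_M)$ of vectors in $\mathbb{R}^c$, the column-wise stacked vector is $\underline{w}=(w_1^\top,\dots,w_M^\top)^\top$. *)

(* Defs.v *)
From mathcomp Require Import all_boot all_order all_algebra.
Set Implicit Arguments. Unset Strict Implicit. Unset Printing Implicit Defensive.
Import Order.TTheory GRing.Theory Num.Theory.
Local Open Scope ring_scope.

(* A sequence (w_1,...,w_M) of vectors in R^c is represented as a matrix
   W : 'M[R]_(c, M) whose m-th column (0-based) is w_{m+1}. *)

Section Defs.
Variable R : realFieldType.

(* 0-based index of the j-th element (j < l) of the k-th pooling window (k < N):
   l*k + j, i.e. the paper's l(k-1)+j in 1-based indexing. *)
Lemma pool_idx_proof (l N : nat) (k : 'I_N) (j : 'I_l) : (l * k + j < l * N)%N.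
Proof.
case: k j => k hk [j hj] /=.
have : (l * k + j < l * k.+1)%N by rewrite mulnS addnC ltn_add2r.
move=> h; apply: (leq_trans h); by rewrite leq_mul2l hk orbT.
Qed.

Definition pool_idx (l N : nat) (k : 'I_N) (j : 'I_l) : 'I_(l * N) :=
  Ordinal (pool_idx_proof k j).

(* channel-wise maximum over the window; l >= 1 is assumed in the theorem,
   the seed of the fold is the first window element (irrelevant when l >= 1
   since max is idempotent). *)
Definition maxpool (c l N : nat) (W : 'M[R]_(c, l * N)) : 'M[R]_(c, N) :=
  \matrix_(ch < c, k < N)
     let win := [seq W ch (pool_idx k j) | j <- enum 'I_l] in
     \big[Num.max/head 0 win]_(x <- win) x.

(* Column-wise stacked vector: entry m*c + ch is (w_m)_ch. *)
Definition stack (c M : nat) (W : 'M[R]_(c, M)) : 'cV[R]_(M * c) :=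
  (mxvec W^T)^T.

Definition blkdiag (c M : nat) (S : 'M[R]_c) : 'M[R]_(M * c) :=
  \matrix_(i, j) \sum_(m < M) \sum_(a < c) \sum_(b < c)
     (((i : nat) == m * c + a)%N && ((j : nat) == m * c + b)%N)%:R * S a b.

Definition diag_posdef (c : nat) (S : 'M[R]_c) : Prop :=
  is_diag_mx S /\ forall v : 'cV[R]_c, v != 0 -> 0 < (v^T *m S *m v) 0 0.

End Defs.

(* Main.v *)
Require Import Defs.
From mathcomp Require Import all_boot all_order all_algebra.
Import Order.TTheory GRing.Theory Num.Theory.
Local Open Scope ring_scope.

Lemma enum_rank_index (T : finType) (x : T) : (enum_rank x : nat) = index x (enum T).
Proof.
by rewrite -[in RHS](nth_enum_rank x x) index_uniq ?enum_uniq // -cardE ltn_ord.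
Qed.

Lemma index_allpairs (T1 T2 : eqType) (s1 : seq T1) (s2 : seq T2) x1 x2 :
  x1 \in s1 -> x2 \in s2 ->
  index (x1, x2) [seq (y1, y2) | y1 <- s1, y2 <- s2] = (index x1 s1 * size s2 + index x2 s2)%N.
Proof.
move=> h1 h2; elim: s1 h1 => [|y s1 IH] //= h1.
rewrite index_cat /=; case: (eqVneq y x1) => [->|ne].
  rewrite mul0n add0n.
  have -> : (x1, x2) \in [seq (x1, y2) | y2 <- s2] by apply/mapP; exists x2.
  by rewrite index_map //; move=> a b [].
have -> : (x1, x2) \in [seq (y, y2) | y2 <- s2] = false.
  by apply/negbTE/mapP => -[z _ [e _]]; rewrite e eqxx in ne.
rewrite size_map IH ?mulSn ?addnA //.
by move: h1; rewrite in_cons eq_sym (negbTE ne).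
Qed.

Lemma mxvec_index_val m n (i : 'I_m) (j : 'I_n) : (mxvec_index i j : nat) = (i * n + j)%N.
Proof.
rewrite /mxvec_index /= enum_rank_index.
have -> : enum {: 'I_m * 'I_n} = prod_enum 'I_m 'I_n by rewrite enumT unlock.
by rewrite /prod_enum index_allpairs ?mem_enum // !index_enum_ord size_enum_ord.
Qed.

Lemma eq_divmod (c m1 a1 m a : nat) : (a1 < c)%N -> (a < c)%N ->
  ((m1 * c + a1 == m * c + a)%N) = ((m1 == m) && (a1 == a)).
Proof.
move=> h1 h; apply/eqP/andP => [e|[/eqP-> /eqP->]] //.
have c0 : (0 < c)%N by apply: leq_ltn_trans h.
have := congr1 (divn^~ c) e; have := congr1 (modn^~ c) e.
rewrite /= !modnMDl !modn_small // !divnMDl // !divn_small // !addn0 => -> ->.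
by split.
Qed.


Section S.
Variable R : realFieldType.

Lemma sum_delta (I : finType) (i0 : I) (F : I -> R) :
  \sum_i (i0 == i)%:R * F i = F i0.
Proof.
rewrite (bigD1 i0) //= eqxx mul1r big1 ?addr0 // => i /negbTE.
by rewrite eq_sym => ->; rewrite mul0r.
Qed.

Lemma blkdiagE c M (S : 'M[R]_c) m1 a1 m2 b2 :
  blkdiag M S (mxvec_index m1 a1) (mxvec_index m2 b2) = (m1 == m2)%:R * S a1 b2.
Proof.
rewrite mxE !mxvec_index_val.
under eq_bigr => m _ do under eq_bigr => a _ do under eq_bigr => b _ do
  rewrite !eq_divmod // -mulnb natrM -!mulnb !natrM.

rewrite (bigD1 m1) //= [X in _ + X]big1 ?addr0; last first.
  move=> m /negbTE ne; apply: big1 => a _; apply: big1 => b _.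
  by rewrite eq_sym in ne; rewrite (_ : (m1 == m :> nat) = false) ?mul0r //.
rewrite eqxx mulr1n.
under eq_bigr => a _ do under eq_bigr => b _ do rewrite mul1r -!mulrA.
rewrite (bigD1 a1) //= [X in _ + X]big1 ?addr0; last first.
  move=> a /negbTE ne; apply: big1 => b _.
  by rewrite (_ : (a1 == a :> nat) = false) ?mul0r // eq_sym.
rewrite eqxx mulr1n.
under eq_bigr => b _ do rewrite mul1r mulrCA.
rewrite (bigD1 b2) //= [X in _ + X]big1 ?addr0; last first.
  move=> b /negbTE ne.
  by rewrite (_ : (b2 == b :> nat) = false) ?mul0r ?mulr0 // eq_sym.
by rewrite eqxx mulr1n mul1r eq_sym.
Qed.

Lemma qf n (A : 'M[R]_n) (x : 'cV_n) :
  (x^T *m A *m x) 0 0 = \sum_j \sum_i x i 0 * A i j * x j 0.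
Proof.
rewrite mxE; apply: eq_bigr => j _; rewrite mxE mulr_suml; apply: eq_bigr => i _.
by rewrite !mxE.
Qed.

Lemma sum_mxvec M c (F : 'I_(M * c) -> R) :
  \sum_i F i = \sum_(m < M) \sum_(a < c) F (mxvec_index m a).
Proof.
rewrite pair_bigA (reindex _ (curry_mxvec_bij _ _)) /=.
by apply: eq_bigr => -[m a].
Qed.

Lemma blk_form c M (S : 'M[R]_c) (W : 'M[R]_(c, M)) :
  ((stack W)^T *m blkdiag M S *m stack W) 0 0
  = \sum_(m < M) ((col m W)^T *m S *m col m W) 0 0.
Proof.
rewrite qf sum_mxvec.
under eq_bigr => m2 _ do under eq_bigr => b2 _ do rewrite sum_mxvec.
apply: eq_bigr => m2 _; rewrite qf; apply: eq_bigr => b2 _.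
rewrite (bigD1 m2) //= [X in _ + X]big1 ?addr0; last first.
  move=> m /negbTE ne; apply: big1 => a _.
  rewrite blkdiagE.
  by rewrite ne mulr0n mul0r mulr0 mul0r.
apply: eq_bigr => a _.

by rewrite blkdiagE eqxx mulr1n mul1r /stack !mxE !mxvecE !mxE.
Qed.
End S.


Section S.
Variable R : realFieldType.

Lemma diag_form c (S : 'M[R]_c) (v : 'cV_c) : is_diag_mx S ->
  (v^T *m S *m v) 0 0 = \sum_a S a a * v a 0 ^+ 2.
Proof.
move=> /is_diag_mxP hd; rewrite qf; apply: eq_bigr => j _.
rewrite (bigD1 j) //= [X in _ + X]big1 ?addr0; last first.
  by move=> i ne; rewrite hd // mulr0 mul0r.
by rewrite expr2 mulrCA mulrA.
Qed.

Lemma diag_pos c (S : 'M[R]_c) : diag_posdef S -> forall a, 0 < S a a.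
Proof.
move=> [hd hp] a.
have nz : (delta_mx a 0 : 'cV[R]_c) != 0.
  apply/eqP => h; have := congr1 (fun M : 'cV[R]_c => M a 0) h.
  by rewrite !mxE !eqxx /= mulr1n => /eqP; rewrite oner_eq0.
have := hp _ nz; rewrite diag_form //.
rewrite (bigD1 a) //= [X in _ + X]big1 ?addr0; last first.
  by move=> i ne; rewrite !mxE (negbTE ne) /= mulr0n expr2 !mulr0.
by rewrite !mxE !eqxx /= mulr1n expr1n mulr1.
Qed.

Lemma bigmax_seq (s : seq R) (idx : R) :
  let B := \big[Num.max/idx]_(y <- s) y in
  (forall x, x \in s -> x <= B) /\ (B = idx \/ B \in s).
Proof.
elim: s => [|x s [IH1 IH2]] /=; first by rewrite big_nil; split => //; left.
rewrite big_cons maxEle; case: leP => hx; split.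
- move=> y; rewrite in_cons => /orP[/eqP->|/IH1] //.
- by case: IH2 => [->|h]; [left|right; rewrite in_cons h orbT].
- move=> y; rewrite in_cons => /orP[/eqP->|/IH1 h] //.
  by apply: (le_trans h); apply: ltW.
- by right; rewrite mem_head.
Qed.

Lemma head_in l (f : 'I_l -> R) : (0 < l)%N ->
  head 0 [seq f j | j <- enum 'I_l] \in [seq f j | j <- enum 'I_l].
Proof.
case: l f => // l f _.
have -> : enum 'I_l.+1 = ord0 :: behead (enum 'I_l.+1).
  case E: (enum 'I_l.+1) => [|x t].
    by have := mem_enum 'I_l.+1 ord0; rewrite E.
  congr (_ :: _); apply: val_inj.
  by have := nth_enum_ord ord0 (ltn0Sn l); rewrite E.
by rewrite /= mem_head.
Qed.

Lemma maxwin l (f : 'I_l -> R) : (0 < l)%N ->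
  let s := [seq f j | j <- enum 'I_l] in
  let B := \big[Num.max/head 0 s]_(x <- s) x in
  (forall j, f j <= B) /\ exists j, B = f j.
Proof.
move=> hl s B; have [h1 h2] := bigmax_seq s (head 0 s).
split; first by move=> j; apply: h1; apply/mapP; exists j; rewrite ?mem_enum.
have hs : B \in s by case: h2 => [e|//]; rewrite /B e; exact: head_in.
by move: hs => /mapP[j _ ->]; exists j.
Qed.

Lemma sq_le (x u v : R) : v <= x -> x <= u -> x ^+ 2 <= Num.max (u ^+ 2) (v ^+ 2).
Proof.
move=> hv hu; rewrite le_max; case: (lerP 0 x) => hx.
  by apply/orP; left; rewrite ler_sqr //; apply: le_trans hx hu.
apply/orP; right; rewrite -sqrrN -(sqrrN v) ler_sqr ?lerN2 //.

  by rewrite nnegrE oppr_ge0 ltW.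
by rewrite nnegrE oppr_ge0 (le_trans hv) // ltW.
Qed.

Lemma term_le_sum l (F : 'I_l -> R) j0 : (forall j, 0 <= F j) -> F j0 <= \sum_j F j.
Proof.
move=> h; rewrite (bigD1 j0) //= lerDl; exact: sumr_ge0.
Qed.

Lemma max_key l (f g : 'I_l -> R) : (0 < l)%N ->
  (\big[Num.max/head 0 [seq f j | j <- enum 'I_l]]_(x <- [seq f j | j <- enum 'I_l]) x
   - \big[Num.max/head 0 [seq g j | j <- enum 'I_l]]_(x <- [seq g j | j <- enum 'I_l]) x) ^+ 2
  <= \sum_j (f j - g j) ^+ 2.
Proof.
move=> hl.
have [hf [j0 e0]] := @maxwin l f hl; have [hg [j1 e1]] := @maxwin l g hl.
apply: (le_trans (@sq_le _ (f j0 - g j0) (f j1 - g j1) _ _)).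
- by rewrite e1 lerD2r hf.
- by rewrite e0 lerD2l lerN2 hg.
rewrite ge_max; apply/andP; split; apply: term_le_sum => j; exact: sqr_ge0.
Qed.
End S.


Lemma sum_pool (R : realFieldType) l N (F : 'I_(l * N) -> R) :
  \sum_i F i = \sum_(k < N) \sum_(j < l) F (pool_idx k j).
Proof.
rewrite pair_bigA.
have inj : injective (fun p : 'I_N * 'I_l => pool_idx p.1 p.2).
  move=> [k j] [k' j'] /(congr1 val) /= /eqP.
  rewrite ![(l * _)%N]mulnC eq_divmod // => /andP[/eqP e1 /eqP e2].
  by congr (_, _); apply: val_inj.
have bij : bijective (fun p : 'I_N * 'I_l => pool_idx p.1 p.2).
  apply: (inj_card_bij inj).
  by rewrite card_prod !card_ord mulnC.
by rewrite (reindex _ (onW_bij _ bij)).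
Qed.

Lemma part1 (R : realFieldType) (c l N : nat) (hl : (0 < l)%N)
  (Sigma : 'M[R]_c) (hS : diag_posdef Sigma) (Wa Wb : 'M[R]_(c, l * N)) (k : 'I_N) :
  let d := col k (maxpool Wa) - col k (maxpool Wb) in
  0 <= - (d^T *m Sigma *m d) 0 0
       + \sum_(j < l)
           (let e := col (pool_idx k j) Wa - col (pool_idx k j) Wb in
            (e^T *m Sigma *m e) 0 0).
Proof.
cbv zeta.
have hd := hS.1.
under eq_bigr => j _ do rewrite (@diag_form _ _ _ _ hd).
rewrite diag_form //.
rewrite exchange_big /= addrC subr_ge0; apply: ler_sum => a _.
rewrite -mulr_sumr ler_wpM2l //; first exact: ltW (@diag_pos _ _ _ hS a).
rewrite !mxE; under eq_bigr => j _ do rewrite !mxE.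
exact: (@max_key _ _ (fun j => Wa a (pool_idx k j)) (fun j => Wb a (pool_idx k j)) hl).
Qed.

Lemma stackB (R : realFieldType) c M (A B : 'M[R]_(c, M)) :
  stack A - stack B = stack (A - B).
Proof.
apply/matrixP => i j; rewrite /stack !mxE.
case/mxvec_indexP: i => m a; by rewrite !ord1 !mxvecE !mxE.
Qed.

Lemma colB' (R : realFieldType) c M (A B : 'M[R]_(c, M)) m :
  col m (A - B) = col m A - col m B.
Proof. by apply/matrixP => i j; rewrite !mxE. Qed.

Theorem lemma9 (R : realFieldType) (c l N : nat)
  (hc : (0 < c)%N) (hl : (0 < l)%N) (hN : (0 < N)%N)
  (Sigma : 'M[R]_c) (hS : diag_posdef Sigma) :
  (forall (Wa Wb : 'M[R]_(c, l * N)) (k : 'I_N),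
     let d := col k (maxpool Wa) - col k (maxpool Wb) in
     0 <= - (d^T *m Sigma *m d) 0 0
          + \sum_(j < l)
              (let e := col (pool_idx k j) Wa - col (pool_idx k j) Wb in
               (e^T *m Sigma *m e) 0 0))
  /\
  (forall Wa Wb : 'M[R]_(c, l * N),
     let z := col_mx (stack (maxpool Wa) - stack (maxpool Wb))
                     (stack Wa - stack Wb) in
     0 <= (z^T *m block_mx (- blkdiag N Sigma) 0 0 (blkdiag (l * N) Sigma) *m z) 0 0).
Proof.
split; first by move=> Wa Wb k; exact: part1.
move=> Wa Wb; cbv zeta.
rewrite tr_col_mx mul_row_block mul_row_col !mulmx0 !addr0 !add0r !stackB.
rewrite mxE mulmxN mulNmx mxE !blk_form (@sum_pool R l N) -sumrN -big_split /=.
apply: sumr_ge0 => k _.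
have := @part1 R c l N hl Sigma hS Wa Wb k; cbv zeta.
move=> H; under eq_bigr => j _ do rewrite colB'.
by rewrite colB'.
Qed.
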